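(* Let $P=(|P|,\preccurlyeq)$ be a finite poset and $S\subseteq|P|$ a chain. Then there is a partial ordering $\preccurlyeq'$ on $|P|$ extending $\preccurlyeq$ (i.e. $x\preccurlyeq y\Rightarrow x\preccurlyeq' y$) such that $|P|\setminus S$ is a chain under $\preccurlyeq'$, and every element of $|P|$ that is $\preccurlyeq$-incomparable with at least one element of $S$ is also $\preccurlyeq'$-incomparable with at least one element of $S$. *)

(* Defs.v *)
From mathcomp Require Import all_boot.
Set Implicit Arguments. Unset Strict Implicit. Unset Printing Implicit Defensive.

Definition partial_order (T : Type) (le : rel T) : Prop :=
  [/\ reflexive le, antisymmetric le & transitive le].

Definition chain (T : finType) (le : rel T) (S : {set T}) : Prop :=
  {in S &, forall x y, le x y || le y x}.

Definition incomparable (T : Type) (le : rel T) (x y : T) : bool :=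
  ~~ (le x y || le y x).

(* Main.v *)
Require Import Defs.
From mathcomp Require Import all_boot.
From mathcomp Require Import zify.
Set Implicit Arguments. Unset Strict Implicit.

Definition Dset (T : finType) (le : rel T) (S : {set T}) (x : T) := [set s in S | le s x].
Definition Uset (T : finType) (le : rel T) (S : {set T}) (x : T) := [set s in S | le x s].
Definition Hset (T : finType) (le : rel T) (x : T) := [set y | le y x].

Definition key (T : finType) (le : rel T) (S : {set T}) (x : T) : nat :=
  let N := #|T|.+1 in
  (((#|Dset le S x| * N + (#|T| - #|Uset le S x|)) * N + #|Hset le x|) * N
    + enum_rank x).

Lemma rank_lt (T : finType) (x : T) : enum_rank x < #|T|.+1.
Proof. by rewrite ltnS; apply: ltnW; apply: ltn_ord. Qed.

Lemma enc_leq N a a' b b' : b < N -> b' < N -> a*N + b <= a'*N + b' ->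
  a <= a' /\ (a = a' -> b <= b').
Proof. move=> h1 h2 h3; split; [nia| move=> ?; subst; lia]. Qed.

Lemma enc_lt N a a' b b' : b < N -> a < a' -> a*N + b <= a'*N + b'.
Proof. move=> *; nia. Qed.

Lemma nestedD (T : finType) (le : rel T) (hle : partial_order le)
  (S : {set T}) (hS : chain le S) a b :
  Dset le S a \subset Dset le S b \/ Dset le S b \subset Dset le S a.
Proof.
case: hle => _ _ tr.
case: (boolP (Dset le S a \subset Dset le S b)) => [h|/subsetPn [s sa snb]]; [by left|right].
apply/subsetP => t; move: sa snb; rewrite !inE => /andP [sS sa] snb /andP [tS tb].
rewrite tS /=; case/orP: (hS _ _ sS tS) => h.
  by rewrite sS (tr _ _ _ h tb) in snb.
exact: tr h sa.
Qed.

Lemma nestedU (T : finType) (le : rel T) (hle : partial_order le)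
  (S : {set T}) (hS : chain le S) a b :
  Uset le S a \subset Uset le S b \/ Uset le S b \subset Uset le S a.
Proof.
case: hle => _ _ tr.
case: (boolP (Uset le S a \subset Uset le S b)) => [h|/subsetPn [s sa snb]]; [by left|right].
apply/subsetP => t; move: sa snb; rewrite !inE => /andP [sS sa] snb /andP [tS tb].
rewrite tS /=; case/orP: (hS _ _ sS tS) => h.
  exact: tr sa h.
by rewrite sS (tr _ _ _ tb h) in snb.
Qed.

Lemma card_nested (T : finType) (A B : {set T}) :
  A \subset B \/ B \subset A -> #|A| <= #|B| -> A \subset B.
Proof.
case=> // h hc; have := subset_leqif_card h; case=> _ <-.
by rewrite eqn_leq hc subset_leq_card.
Qed.

Lemma Dset_mono (T : finType) (le : rel T) (hle : partial_order le) (S : {set T}) a b :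
  le a b -> Dset le S a \subset Dset le S b.
Proof.
case: hle => _ _ tr h; apply/subsetP => s; rewrite !inE => /andP [-> sa].
exact: tr sa h.
Qed.

Lemma Uset_mono (T : finType) (le : rel T) (hle : partial_order le) (S : {set T}) a b :
  le a b -> Uset le S b \subset Uset le S a.
Proof.
case: hle => _ _ tr h; apply/subsetP => s; rewrite !inE => /andP [-> sa].
exact: tr h sa.
Qed.

Lemma key_mono (T : finType) (le : rel T) (hle : partial_order le) (S : {set T}) a b :
  le a b -> key le S a <= key le S b.
Proof.
move=> h; case: (eqVneq a b) => [->//|nab].
have hlt : #|Hset le a| < #|Hset le b|.
  apply: proper_card; apply/properP; split.
    case: hle => _ _ tr; apply/subsetP => y; rewrite !inE => ya; exact: tr ya h.
  exists b; rewrite !inE; first by case: hle => r _ _; apply: r.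
  apply/negP => ba; case: hle => _ an _; move/eqP: nab; apply; by apply: an; rewrite h ba.
have d1 := subset_leq_card (Dset_mono hle S h).
have u1 := subset_leq_card (Uset_mono hle S h).
have u2 : #|Uset le S a| <= #|T| by apply: max_card.
rewrite /key /=; apply: enc_lt; first exact: rank_lt.
nia.
Qed.

Lemma key_inj (T : finType) (le : rel T) (S : {set T}) a b :
  key le S a = key le S b -> a = b.
Proof.
rewrite /key /= => /(congr1 (modn^~ #|T|.+1)).
rewrite !modnMDl !modn_small; last 2 first.
- exact: rank_lt.
- exact: rank_lt.
by move/val_inj/enum_rank_inj.
Qed.

Lemma key_lex (T : finType) (le : rel T) (S : {set T}) a b :
  key le S a <= key le S b ->
  #|Dset le S a| <= #|Dset le S b| /\
  (#|Dset le S a| = #|Dset le S b| -> #|Uset le S b| <= #|Uset le S a|).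
Proof.
have u1 : #|Uset le S a| <= #|T| by apply: max_card.
have u2 : #|Uset le S b| <= #|T| by apply: max_card.
have o (x : T) : enum_rank x < #|T|.+1 by exact: rank_lt.
have hh (x : T) : #|Hset le x| < #|T|.+1 by rewrite ltnS max_card.
rewrite /key /= => /enc_leq [] // h1 _.
case/enc_leq: h1 => // h2 _.
case/enc_leq: h2 => [||h3 h4]; try lia.
split=> // e; move: (h4 e) u1 u2; clear; move: #|T| #|Uset le S a| #|Uset le S b| => n p q; lia. Qed.

Lemma Hset_lt (T : finType) (le : rel T) (hle : partial_order le) a b :
  le a b -> a != b -> #|Hset le a| < #|Hset le b|.
Proof.
move=> h nab; case: hle => r an tr.
apply: proper_card; apply/properP; split.
  apply/subsetP => y; rewrite !inE => ya; exact: tr ya h.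
exists b; rewrite !inE; first exact: r.
apply/negP => ba; move/eqP: nab; apply; by apply: an; rewrite h ba.
Qed.

Lemma key_D (T : finType) (le : rel T) (hle : partial_order le)
  (S : {set T}) (hS : chain le S) a b :
  key le S a <= key le S b -> Dset le S a \subset Dset le S b.
Proof.
case/key_lex => h _; exact: card_nested (nestedD hle hS a b) h.
Qed.

Lemma key_U (T : finType) (le : rel T) (hle : partial_order le)
  (S : {set T}) (hS : chain le S) a b :
  key le S a <= key le S b -> Dset le S b \subset Dset le S a ->
  Uset le S b \subset Uset le S a.
Proof.
case/key_lex => h1 h2 h3.
have e : #|Dset le S a| = #|Dset le S b|.
  by apply/eqP; rewrite eqn_leq h1 subset_leq_card.
exact: card_nested (nestedU hle hS b a) (h2 e).
Qed.

Theorem lemma5p4 (T : finType) (le : rel T) (hle : partial_order le)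
  (S : {set T}) (hS : chain le S) :
  exists le' : rel T,
    [/\ partial_order le',
        (forall x y, le x y -> le' x y),
        chain le' (~: S)
      & forall x : T, (exists2 s, s \in S & incomparable le x s) ->
                      exists2 s, s \in S & incomparable le' x s].
Proof.
have hle' := hle; case: hle' => r an tr.
pose k := key le S.
have km : forall a b, le a b -> k a <= k b by move=> a b; exact: key_mono.
have kinj : forall a b, k a = k b -> a = b by move=> a b; exact: key_inj.
pose le' : rel T := fun x y => le x y ||
  [exists z, exists w, [&& z \notin S, w \notin S, le x z, k z <= k w & le w y]].
have ex x y : reflect (exists z w, [/\ z \notin S, w \notin S, le x z, k z <= k w & le w y])
   [exists z, exists w, [&& z \notin S, w \notin S, le x z, k z <= k w & le w y]].
  apply: (iffP existsP) => [[z /existsP [w /and5P [? ? ? ? ?]]]|[z [w [? ? ? ? ?]]]].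
    by exists z, w.
  by exists z; apply/existsP; exists w; apply/and5P.
exists le'; split.
- split.
  + by move=> x; rewrite /le' r.
  + move=> x y /andP [].
    case/orP=> [hxy|/ex [z1 [w1 [z1S w1S xz1 k1 w1y]]]];
      case/orP=> [hyx|/ex [z2 [w2 [z2S w2S yz2 k2 w2x]]]].
    * by apply: an; rewrite hxy hyx.
    * have kwz : k w2 <= k z2 by apply: km; apply: tr w2x (tr _ _ _ hxy yz2).
      have ezw : z2 = w2 by apply: kinj; apply/eqP; rewrite eqn_leq k2 kwz.
      subst w2; apply: an; rewrite hxy; exact: tr yz2 w2x.
    * have kwz : k w1 <= k z1 by apply: km; apply: tr w1y (tr _ _ _ hyx xz1).
      have ezw : z1 = w1 by apply: kinj; apply/eqP; rewrite eqn_leq k1 kwz.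
      subst w1; apply: an; rewrite hyx andbT; exact: tr xz1 w1y.
    * have a1 : k w1 <= k z2 by apply: km; apply: tr w1y yz2.
      have a2 : k w2 <= k z1 by apply: km; apply: tr w2x xz1.
      have e1 : z1 = w1 by apply: kinj; apply/eqP; rewrite eqn_leq k1 /=;
        apply: leq_trans a1 (leq_trans k2 a2).
      have e2 : z2 = w2 by apply: kinj; apply/eqP; rewrite eqn_leq k2 /=;
        apply: leq_trans a2 (leq_trans k1 a1).
      subst w1 w2; apply: an; rewrite (tr _ _ _ xz1 w1y) (tr _ _ _ yz2 w2x).
      done.
  + move=> y x z.
    case/orP=> [hxy|/ex [z1 [w1 [z1S w1S xz1 k1 w1y]]]];
      case/orP=> [hyz|/ex [z2 [w2 [z2S w2S yz2 k2 w2z]]]].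
    * by rewrite /le' (tr _ _ _ hxy hyz).
    * apply/orP; right; apply/ex; exists z2, w2; split=> //; exact: tr hxy yz2.
    * apply/orP; right; apply/ex; exists z1, w1; split=> //; exact: tr w1y hyz.
    * apply/orP; right; apply/ex; exists z1, w2; split=> //.
      apply: leq_trans k1 _; apply: leq_trans _ k2; apply: km; exact: tr w1y yz2.
- by move=> x y h; rewrite /le' h.
- move=> x y; rewrite !inE => xS yS.
  case/orP: (leq_total (k x) (k y)) => h; apply/orP; [left|right];
    apply/orP; right; apply/ex.
    by exists x, y; split=> //; apply: r.
  by exists y, x; split=> //; apply: r.
- move=> x [s sS inc].
  have xS : x \notin S.
    apply/negP => xS; move: inc; by rewrite /incomparable hS.
  move: inc; rewrite /incomparable negb_or => /andP [nxs nsx].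
  pose A := [set t in S | ~~ le t x].
  have sA : s \in A by rewrite inE sS nsx.
  case: (arg_minnP (fun t => #|Hset le t|) sA) => m mA mmin.
  have mA2 : m \in A := mA; move: (mA2); rewrite inE => /andP [mS nmx].
  have mlow : forall t, t \in A -> le m t.
    move=> t tA; move: (tA); rewrite inE => /andP [tS _].
    case/orP: (hS _ _ mS tS) => // tm.
    case: (eqVneq t m) => [->|ntm]; first exact: r.
    by have := Hset_lt hle tm ntm; rewrite ltnNge mmin.
  have nxm : ~~ le x m.
    by apply/negP => xm; move: nxs; rewrite (tr _ _ _ xm (mlow _ sA)).
  exists m => //; rewrite /incomparable /le' negb_or; apply/andP; split.
  + rewrite negb_or nxm /=; apply/negP => /ex [z [w [zS wS xz kzw wm]]].
    have kxw : k x <= k w by apply: leq_trans (km _ _ xz) kzw.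
    have Dxw := key_D hle hS kxw.
    case: (boolP (Dset le S w \subset Dset le S x)) => [Dwx|/subsetPn [t tw ntx]].
      have := subsetP (key_U hle hS kxw Dwx) m; rewrite !inE mS wm /= => /(_ isT).
      by rewrite (negbTE nxm).
    move: tw ntx; rewrite !inE => /andP [tS tw]; rewrite tS /= => ntx.
    have mt : le m t by apply: mlow; rewrite inE tS ntx.
    have tm : le t m by apply: tr tw wm.
    have etm : t = m by apply: an; rewrite tm mt.
    subst t; have ewm : w = m by apply: an; rewrite wm tw.
    by subst w; rewrite mS in wS.
  + rewrite negb_or nmx /=; apply/negP => /ex [z [w [zS wS mz kzw wx]]].
    have kzx : k z <= k x by apply: leq_trans kzw (km _ _ wx).
    have := subsetP (key_D hle hS kzx) m; rewrite !inE mS mz /= => /(_ isT).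
    by rewrite (negbTE nmx).
Qed.
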